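(* Let $k\ge1$, $\tau\in Y_k$, $\sigma_1,\dots,\sigma_k\in Y$, and $n=\sum_{i=1}^k(|\sigma_i|+1)$. Then for every $f\in I\cdot\mathrm{Mult}[[B]]$ and all $x_1,\dots,x_n\in B$, $$f_{\tau\circ(\sigma_1\vee|,\dots,\sigma_k\vee|)}(x_1,\dots,x_n)=f_\tau\Big(f_{\sigma_1}(x_1,\dots,x_{m_1-1})x_{m_1},\ f_{\sigma_2}(x_{m_1+1},\dots,x_{m_2-1})x_{m_2},\ \dots,\ f_{\sigma_k}(x_{m_{k-1}+1},\dots,x_{m_k-1})x_{m_k}\Big),$$ where $m_i=\sum_{l\le i}(|\sigma_l|+1)$.
   Context: $B$ is a unital algebra over a field $\mathbb K$ of characteristic zero. $\mathrm{Mult}[[B]]$: sequences $f=(f_n)_{n\ge0}$ of multilinear maps $f_n:B^n\to B$; $I\cdot\mathrm{Mult}[[B]]$ consists of those $f$ of the form $f_0=0$, $f_n(x_1,\dots,x_n)=x_1F_{n-1}(x_2,\dots,x_n)$ for some $F\in\mathrm{Mult}[[B]]$. Planar binary trees: $Y_0=\{|\}$, $Y_n=\{\sigma\vee\tau:\sigma\in Y_k,\tau\in Y_l,k+l=n-1\}$, where $\sigma\vee\tau$ has a root with left subtree $\sigma$ and right subtree $\tau$; $|\tau|$ is the number of internal vertices, ordered left-to-right recursively (vertices of $\sigma$, then the root, then vertices of $\tau$). Each $\tau\in Y_n$, $n\ge1$, is uniquely $\tau_1\vee(\tau_2\vee(\cdots\vee(\tau_k\vee|)))$; $j_i=|\tau_1|+\dots+|\tau_i|+i$.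 For $f\in\mathrm{Mult}[[B]]$: $f_|=1$ and $f_\tau(x_1,\dots,x_n)=f_k(f_{\tau_1}(x_1,\dots,x_{j_1-1})x_{j_1},\dots,f_{\tau_k}(x_{j_{k-1}+1},\dots,x_{j_k-1})x_{j_k})$. Grafting: for trees $X,\sigma$, $X/\sigma$ is $\sigma$ with its leftmost leaf replaced by $X$, and $\sigma\backslash X$ is $\sigma$ with its rightmost leaf replaced by $X$ (so $X/|=X=|\backslash X$). Substitution: for $\tau\in Y_m$ and trees $\rho_1,\dots,\rho_m$, define $\tau\circ(\rho_1,\dots,\rho_m)$ by $|\circ()=|$ and, for $\tau=\alpha\vee\beta$ with $|\alpha|=p$, $\tau\circ(\rho_1,\dots,\rho_m)=\big((\alpha\circ(\rho_1,\dots,\rho_p))/\rho_{p+1}\big)\backslash(\beta\circ(\rho_{p+2},\dots,\rho_m))$ (the $i$-th vertex of $\tau$ in left-to-right order is replaced by $\rho_i$). *)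

(* Defs.v *)
From HB Require Import structures.
From mathcomp Require Import all_boot all_order all_algebra.
Set Implicit Arguments. Unset Strict Implicit. Unset Printing Implicit Defensive.
Import GRing.Theory.
Local Open Scope ring_scope.

(* Planar binary trees: Leaf = |, Node l r = l \vee r. *)
Inductive tree : Type := Leaf | Node of tree & tree.

Fixpoint vsize (t : tree) : nat :=
  match t with Leaf => 0%N | Node l r => (vsize l + vsize r).+1 end.

(* right spine decomposition tau = tau_1 v (tau_2 v (... v (tau_k v |))) *)
Fixpoint spine (t : tree) : seq tree :=
  match t with Leaf => [::] | Node l r => l :: spine r end.

(* X / sigma : sigma with its leftmost leaf replaced by X *)
Fixpoint graftL (X s : tree) : tree :=
  match s with Leaf => X | Node l r => Node (graftL X l) r end.

(* sigma \ X : sigma with its rightmost leaf replaced by X *)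
Fixpoint graftR (s X : tree) : tree :=
  match s with Leaf => X | Node l r => Node l (graftR r X) end.

(* substitution tau o (rho_1, ..., rho_m) *)
Fixpoint tsubst (t : tree) (rs : seq tree) : tree :=
  match t with
  | Leaf => Leaf
  | Node a b =>
      graftR (graftL (tsubst a (take (vsize a) rs)) (nth Leaf rs (vsize a)))
             (tsubst b (drop (vsize a).+1 rs))
  end.

Section Mult.
Variables (K : fieldType) (B : algType K).

(* An element of Mult[[B]] is a sequence f = (f_n)_n; f n is meant to be
   applied to lists of length n. *)
Definition multilinear (f : nat -> seq B -> B) : Prop :=
  forall (n : nat) (xs ys : seq B) (a : K) (x y : B),
    (size xs + size ys).+1 = n ->
    f n (xs ++ (a *: x + y) :: ys) = a *: f n (xs ++ x :: ys) + f n (xs ++ y :: ys).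

Definition in_IMult (f : nat -> seq B -> B) : Prop :=
  exists F : nat -> seq B -> B,
    multilinear F /\ f 0%N [::] = 0 /\
    forall (n : nat) (x : B) (xs : seq B), size xs = n -> f n.+1 (x :: xs) = x * F n xs.

(* f_tau (x_1, ..., x_n); targs t xs is the list of arguments
   f_{tau_1}(x_1..x_{j_1-1}) x_{j_1}, ..., fed to f_k. *)
Fixpoint ftree (f : nat -> seq B -> B) (t : tree) (xs : seq B) {struct t} : B :=
  match t with
  | Leaf => 1
  | Node l r =>
      f (size (spine t))
        (ftree f l (take (vsize l) xs) * nth 0 xs (vsize l)
           :: targs f r (drop (vsize l).+1 xs))
  end
with targs (f : nat -> seq B -> B) (t : tree) (xs : seq B) {struct t} : seq B :=
  match t with
  | Leaf => [::]
  | Node l r =>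
      ftree f l (take (vsize l) xs) * nth 0 xs (vsize l)
        :: targs f r (drop (vsize l).+1 xs)
  end.

End Mult.

(* Main.v *)
Require Import Defs.
From HB Require Import structures.
From mathcomp Require Import all_boot all_order all_algebra.
From mathcomp Require Import zify.
Import GRing.Theory.
Local Open Scope ring_scope.

Section Proof.
Variables (K : fieldType) (B : algType K) (f : nat -> seq B -> B) (F : nat -> seq B -> B).
Hypothesis hF : forall n x xs, size xs = n -> f n.+1 (x :: xs) = x * F n xs.

Lemma size_targs t xs : size (targs f t xs) = size (spine t).
Proof. by elim: t xs => //= l _ r IH xs; rewrite IH. Qed.

Lemma ftree_node l r xs : ftree f (Node l r) xs =
  ftree f l (take (vsize l) xs) * nth 0 xs (vsize l) *
  F (size (spine r)) (targs f r (drop (vsize l).+1 xs)).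
Proof. by rewrite /= hF // size_targs. Qed.

Lemma ftree_targs l r xs : ftree f (Node l r) xs =
  f (size (spine (Node l r))) (targs f (Node l r) xs).
Proof. by []. Qed.

Lemma take_all t : forall xs,
  ftree f t (take (vsize t) xs) = ftree f t xs /\
  targs f t (take (vsize t) xs) = targs f t xs.
Proof.
elim: t => [|l IHl r IHr] xs //=.
have E : targs f (Node l r) (take (vsize (Node l r)) xs) = targs f (Node l r) xs.
  rewrite /= take_takel; last by lia.
  rewrite nth_take; last by lia.
  rewrite -[(vsize l + vsize r).+1]addSn addnC -take_drop.
  by rewrite (proj2 (IHr _)).
split; last exact: E.
by rewrite [LHS]ftree_targs [RHS]ftree_targs E.
Qed.

Lemma ftree_take t xs : ftree f t (take (vsize t) xs) = ftree f t xs.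
Proof. exact: (proj1 (take_all t xs)). Qed.

Lemma vsize_graftL X s : vsize (graftL X s) = (vsize X + vsize s)%N.
Proof. elim: s => [|l IHl r _] /=; first by rewrite addn0. by rewrite IHl addnS addnA. Qed.

Lemma ftree_graftL X s w : ftree f (graftL X s) w =
  ftree f X (take (vsize X) w) * ftree f s (drop (vsize X) w).
Proof.
elim: s w => [|l IHl r _] w /=.
  by rewrite mulr1 ftree_take.
rewrite !hF ?size_targs // IHl vsize_graftL take_takel ?leq_addr //.
rewrite addnC -take_drop nth_drop drop_drop !mulrA.
by rewrite [((vsize l).+1 + _)%N]addSn [(vsize l + vsize X)%N]addnC.
Qed.


Fixpoint ys (ss : seq tree) (xs : seq B) : seq B :=
  match ss with
  | [::] => [::]
  | s :: ss' => ftree f s (take (vsize s) xs) * nth 0 xs (vsize s)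
                :: ys ss' (drop (vsize s).+1 xs)
  end.

Definition S (ss : seq tree) := sumn [seq (vsize s).+1 | s <- ss].

Lemma size_ys ss xs : size (ys ss xs) = size ss.
Proof. by elim: ss xs => //= s ss IH xs; rewrite IH. Qed.

Lemma ys_cat sa sb xs : ys (sa ++ sb) xs = ys sa xs ++ ys sb (drop (S sa) xs).
Proof.
elim: sa xs => [|s sa IH] xs /=; first by rewrite drop0.
by rewrite IH drop_drop addnC.
Qed.

Lemma ys_take ss : forall n xs, (S ss <= n)%N -> ys ss (take n xs) = ys ss xs.
Proof.
rewrite /S; elim: ss => [|s ss IH] n xs //= hle.
rewrite take_takel; last by lia.
rewrite nth_take; last by lia.
have -> : drop (vsize s).+1 (take n xs) = take (n - (vsize s).+1) (drop (vsize s).+1 xs).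
  by rewrite take_drop subnK //; lia.
rewrite IH //. lia.
Qed.

Lemma ftree_from T t xs ws : size (spine T) = size (spine t) ->
  targs f T xs = targs f t ws -> ftree f T xs = ftree f t ws.
Proof.
case: T => [|l r]; case: t => [|l' r'] hs ht //.
by rewrite !ftree_targs ht hs.
Qed.

Definition N (s : tree) := Node s Leaf.

Lemma main t : forall ss, size ss = vsize t ->
  [/\ vsize (tsubst t (map N ss)) = S ss,
      size (spine (tsubst t (map N ss))) = size (spine t) &
      forall xs, targs f (tsubst t (map N ss)) xs = targs f t (ys ss xs)].
Proof.
elim: t => [|a IHa b IHb] ss /=.
  by case: ss.
move=> hsize.
set p := vsize a.
have hp : (p < size ss)%N by rewrite hsize /p; lia.
have tsN : tsubst (Node a b) (map N ss) = Node (graftL (tsubst a (map N (take p ss))) (nth Leaf ss p)) (tsubst b (map N (drop p.+1 ss))).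
  by rewrite /= -map_take -map_drop (nth_map Leaf).
rewrite -/(tsubst (Node a b) (map N ss)) tsN.
set sg := nth Leaf ss p.
have ess : ss = take p ss ++ sg :: drop p.+1 ss by rewrite -drop_nth // cat_take_drop.
have [va sa ta] := IHa (take p ss) (size_takel (ltnW hp)).
have hszb : size (drop p.+1 ss) = vsize b by rewrite size_drop hsize /p; lia.
have [vb sb tb] := IHb (drop p.+1 ss) hszb.
set A := tsubst a _. set B' := tsubst b _.
have eS : S ss = (S (take p ss) + (vsize sg).+1 + S (drop p.+1 ss))%N.
  by rewrite {1}ess /S map_cat sumn_cat /= addnA.
split.
- by rewrite /= vsize_graftL va vb eS; lia.
- by rewrite /= sb.
move=> xs.
have yss : ys ss xs = ys (take p ss) xs ++ (ftree f sg (take (vsize sg) (drop (S (take p ss)) xs)) * nth 0 (drop (S (take p ss)) xs) (vsize sg)) :: ys (drop p.+1 ss) (drop (vsize sg).+1 (drop (S (take p ss)) xs)).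
  by rewrite {1}ess ys_cat.
have hsz : size (ys (take p ss) xs) = p by rewrite size_ys size_takel // ltnW.
rewrite yss /= take_size_cat // nth_cat hsz ltnn subnn /=.
rewrite -cat_rcons drop_size_cat ?size_rcons ?hsz //.
rewrite ftree_graftL vsize_graftL !va take_takel ?leq_addr //.
rewrite (ftree_from _ _ _ _ sa (ta _)) ys_take //.
rewrite addnC -take_drop nth_drop drop_drop tb.
by rewrite !mulrA addSn [(S (take p ss) + _)%N]addnC.
Qed.

Lemma ys_iota ss xs : [seq ftree f (nth Leaf ss i) (take (vsize (nth Leaf ss i)) (drop (S (take i ss)) xs)) * nth 0 xs (S (take i ss) + vsize (nth Leaf ss i)) | i <- iota 0 (size ss)] = ys ss xs.
Proof.
elim: ss xs => [|s ss IH] xs //=.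
rewrite /S /= drop0 add0n -/S.
have := iotaDl 1 0 (size ss); rewrite addn0 => ->.
rewrite -map_comp -IH; congr (_ :: _).
apply: eq_map => i /=.
rewrite add0n -/(S (take i ss)) drop_drop nth_drop addnA.
by rewrite [(S (take i ss) + _)%N]addnC.
Qed.

End Proof.

Theorem lemma3 (K : fieldType) (B : algType K)
    (charK0 : [pchar K] =i pred0)
    (k : nat) (tau : tree) (sigmas : seq tree)
    (hk : (1 <= k)%N) (htau : vsize tau = k) (hsig : size sigmas = k)
    (f : nat -> seq B -> B) (hf : in_IMult f)
    (xs : seq B)
    (hxs : size xs = sumn [seq (vsize s).+1 | s <- sigmas]) :
  let m := fun i : nat => sumn [seq (vsize s).+1 | s <- take i sigmas] in
  ftree f (tsubst tau [seq Node s Leaf | s <- sigmas]) xs =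
  ftree f tau
    [seq ftree f (nth Leaf sigmas i)
           (take (vsize (nth Leaf sigmas i)) (drop (m i) xs))
         * nth 0 xs (m i + vsize (nth Leaf sigmas i))
    | i <- iota 0 k].
Proof.
move=> m.
have [F [_ [_ hF]]] := hf.
have hs : size sigmas = vsize tau by rewrite hsig htau.
have [_ sp tg] := @main K B f F hF tau sigmas hs.
rewrite -hsig (@ys_iota K B f sigmas xs).
exact: (@ftree_from K B f _ _ _ _ sp (tg xs)).
Qed.
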